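(* For every uniformly coherent state $\Psi_k\in\mathcal U_k$, $C_{c,\mathrm{PIO}}(\Psi_k)\le\log k=C_f^{\mathcal U}(\Psi_k)$.
   Context: Fixed computational basis; logs base 2. $\mathcal U_k$ is the set of uniformly coherent states $|\Psi\rangle=k^{-1/2}\sum_{j\in J}e^{i\theta_j}|j\rangle$, $|J|=k$, $\theta_j\in\mathbb R$. $C_f^{\mathcal U}(\rho)=\inf\{\sum_\alpha p_\alpha\log k_\alpha:\rho=\sum_\alpha p_\alpha|\Psi_\alpha\rangle\langle\Psi_\alpha|,\ |\Psi_\alpha\rangle\in\mathcal U_{k_\alpha}\}$ ($+\infty$ if no decomposition exists). PIO: channels $X\mapsto\sum_{\alpha,\beta}p_\alpha U_{\alpha,\beta}\Pi_{\beta|\alpha}X\Pi_{\beta|\alpha}U_{\alpha,\beta}^\dagger$ with $p$ a probability distribution, $U_{\alpha,\beta}$ incoherent unitaries (permutation times diagonal unitary), and for each $\alpha$ incoherent projectors $\Pi_{\beta|\alpha}=\sum_{i\in I}|i\rangle\langle i|$ summing to the identity; different input/output dimensions are handled by identifying spaces with spans of subsets of basis vectors of a common space (appending incoherent states, relabelling basis vectors and discarding subsystems allowed). $\Psi_{2^m}=2^{-m/2}\sum_{i=1}^{2^m}|i\rangle$. $C_{c,\mathrm{PIO}}(\rho)=\inf\{r:\lim_n\inf_{\Lambda\in\mathrm{PIO}}\|\Lambda(\Psi_{2^{\lfloor rn\rfloor}})-\rho^{\otimes n}\|_1=0\}$. *)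

(* Defs.v *)
From HB Require Import structures.
From mathcomp Require Import all_boot all_order all_algebra all_fingroup.
From mathcomp Require Import complex mxtens.
From mathcomp Require Import all_classical all_reals all_analysis.

Set Implicit Arguments.
Unset Strict Implicit.
Unset Printing Implicit Defensive.

Import Order.TTheory GRing.Theory Num.Theory.
Import numFieldNormedType.Exports.
Local Open Scope ring_scope.
Local Open Scope classical_set_scope.

Section QCoh.
Variable R : realType.
Local Notation C := (R[i]).

Definition log2 (x : R) : R := ln x / ln 2.

Definition expi (t : R) : C := (cos t +i* sin t)%C.

Definition adj m n (A : 'M[C]_(m, n)) : 'M[C]_(n, m) := (map_mx Num.conj A)^T.

Definition ketbra d (psi : 'cV[C]_d) : 'M[C]_d := psi *m adj psi.

Definition unif_coh d (k : nat) (psi : 'cV[C]_d) : Prop :=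
  (0 < k)%N /\
  exists (J : {set 'I_d}) (theta : 'I_d -> R),
    #|J| = k /\
    forall j : 'I_d, psi j 0 =
      if j \in J then ((Num.sqrt (k%:R : R))^-1)%:C%C * expi (theta j) else 0.

Definition max_coh (M : nat) : 'cV[C]_M :=
  const_mx (((Num.sqrt (M%:R : R))^-1)%:C%C).

Fixpoint tpow d (rho : 'M[C]_d) (n : nat) : 'M[C]_(d ^ n) :=
  match n with
  | 0 => 1%:M
  | n'.+1 => castmx (esym (expnSr d n'), esym (expnSr d n')) (tensmx (tpow rho n') rho)
  end.

Definition unitary N (U : 'M[C]_N) : Prop := U *m adj U = 1%:M.

Definition trnorm N (X : 'M[C]_N) : R :=
  sup [set Normc.normc (\tr (U *m X)) | U in [set U : 'M[C]_N | unitary U]].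

Definition inc_proj N (I : {set 'I_N}) : 'M[C]_N := diag_mx (\row_i (i \in I)%:R).

Definition incoh_unitary N (U : 'M[C]_N) : Prop :=
  exists (s : 'S_N) (v : 'rV[C]_N),
    (forall i, v 0 i * Num.conj (v 0 i) = 1) /\ U = perm_mx s *m diag_mx v.

Definition pio_fixed N (Phi : 'M[C]_N -> 'M[C]_N) : Prop :=
  exists (A B : nat) (p : 'I_A -> R) (U : 'I_A -> 'I_B -> 'M[C]_N)
         (P : 'I_A -> 'I_B -> {set 'I_N}),
    (forall a, 0 <= p a) /\ \sum_a p a = 1 /\
    (forall a b, incoh_unitary (U a b)) /\
    (forall a, \sum_b inc_proj (P a b) = 1%:M) /\
    forall X, Phi X = \sum_a \sum_b (p a)%:C%C *:
        (U a b *m inc_proj (P a b) *m X *m inc_proj (P a b) *m adj (U a b)).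

(* identify 'M_a with the operators on the span of the first a basis vectors
   of an N-dimensional space (i.e. appending incoherent states) *)
Definition embed a N (X : 'M[C]_a) : 'M[C]_N :=
  \matrix_(i, j)
    match @insub _ (fun k => (k < a)%N) 'I_a (val i),
          @insub _ (fun k => (k < a)%N) 'I_a (val j) with
    | Some i', Some j' => X i' j'
    | _, _ => 0
    end.

Definition ptrace b e (Y : 'M[C]_(b * e)) : 'M[C]_b :=
  \matrix_(i, i') \sum_(j < e) Y (mxtens_index (i, j)) (mxtens_index (i', j)).

Definition PIO a b (Lam : 'M[C]_a -> 'M[C]_b) : Prop :=
  exists (e : nat) (Phi : 'M[C]_(b * e) -> 'M[C]_(b * e)),
    (a <= b * e)%N /\ pio_fixed Phi /\
    forall X, Lam X = ptrace (Phi (embed (b * e) X)).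

(* number of maximally coherent qubits floor(r n) used at blocklength n *)
Definition nbits (r : R) (n : nat) : nat := absz (Num.floor (r * n%:R)).

Definition dil_err d (rho : 'M[C]_d) (r : R) (n : nat) : R :=
  inf [set trnorm (Lam (ketbra (max_coh (2 ^ nbits r n)%N)) - tpow rho n)
      | Lam in [set Lam : 'M[C]_(2 ^ nbits r n) -> 'M[C]_(d ^ n) | PIO Lam]].

Definition C_c_PIO d (rho : 'M[C]_d) : \bar R :=
  ereal_inf [set r%:E | r in [set r : R | 0 <= r /\ dil_err rho r n @[n --> \oo] --> (0 : R)]].

Definition C_f_U d (rho : 'M[C]_d) : \bar R :=
  ereal_inf [set x : \bar R | (exists (L : nat) (p : 'I_L -> R) (ks : 'I_L -> nat)
                            (phi : 'I_L -> 'cV[C]_d),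
    (forall a, 0 <= p a) /\ \sum_a p a = 1 /\
    (forall a, unif_coh (ks a) (phi a)) /\
    rho = \sum_a (p a)%:C%C *: ketbra (phi a) /\
    x = (\sum_a p a * log2 (ks a)%:R)%:E)].

End QCoh.

(* Main.v *)
Require Import Defs.
From HB Require Import structures.
From mathcomp Require Import all_boot all_order all_algebra all_fingroup.
From mathcomp Require Import complex mxtens.
From mathcomp Require Import all_classical all_reals all_analysis.
From mathcomp Require Import zify ring.
Import Order.TTheory GRing.Theory Num.Theory.
Local Open Scope ring_scope.
Set Implicit Arguments. Unset Strict Implicit. Unset Printing Implicit Defensive.


Section Comb.
Local Open Scope nat_scope.
Variables (sn : seq nat) (D K M : nat).
Hypotheses (Hu : uniq sn) (Hs : size sn = K) (HD : all (fun i => i < D) sn)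
  (K0 : 0 < K) (M0 : 0 < M).

Definition sl l := nth 0 sn l.
Definition idx i := index i sn.
Definition cond i j := (M <= j) && (i \in sn) && ((j - M) * K + idx i < M).
Definition fc x :=
  if x < M then sl (x %% K) * (M + M) + (M + x %/ K)
  else if cond (x %/ (M + M)) (x %% (M + M)) then
    (x %% (M + M) - M) * K + idx (x %/ (M + M)) else x.

Lemma sl_in l : l < K -> sl l \in sn.
Proof. by move=> lK; rewrite /sl mem_nth // Hs. Qed.

Lemma sl_lt l : l < K -> sl l < D.
Proof. by move=> lK; have /allP := HD; apply; apply: sl_in. Qed.

Lemma idx_sl l : l < K -> idx (sl l) = l.
Proof. by move=> lK; rewrite /idx /sl index_uniq // Hs. Qed.

Lemma sl_idx i : i \in sn -> sl (idx i) = i.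
Proof. by move=> iS; rewrite /sl /idx nth_index. Qed.

Lemma idx_lt i : i \in sn -> idx i < K.
Proof. by move=> iS; rewrite /idx -Hs index_mem. Qed.

Lemma divE i j : j < M + M -> (i * (M + M) + j) %/ (M + M) = i.
Proof. by move=> jE; rewrite divnMDl ?divn_small ?addn0 //; lia. Qed.

Lemma modE i j : j < M + M -> (i * (M + M) + j) %% (M + M) = j.
Proof. by move=> jE; rewrite modnMDl modn_small. Qed.

Lemma fc_small x : x < M -> M <= fc x.
Proof. by move=> xM; rewrite /fc xM addnCA leq_addr. Qed.

Lemma fc_big i j : j < M + M -> M <= i * (M + M) + j ->
  fc (i * (M + M) + j) = if cond i j then (j - M) * K + idx i else i * (M + M) + j.
Proof. by move=> jE xM; rewrite /fc ltnNge xM /= divE // modE. Qed.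

Lemma fcK x : fc (fc x) = x.
Proof.
have EE : 0 < M + M by lia.
case: (ltnP x M) => xM.
  have lK : x %% K < K by rewrite ltn_mod.
  have bM : x %/ K < M by apply: leq_ltn_trans (leq_div _ _) xM.
  have jE : M + x %/ K < M + M by rewrite ltn_add2l.
  rewrite {2}/fc xM fc_big //; last by rewrite addnCA leq_addr.
  have -> : cond (sl (x %% K)) (M + x %/ K).
    rewrite /cond sl_in // idx_sl // andbT.
    by rewrite addKn -divn_eq xM leq_addr.
  by rewrite idx_sl // addKn -divn_eq.
rewrite {2}/fc ltnNge xM /=.
case Hc: (cond _ _); last by rewrite /fc ltnNge xM /= Hc.
move: Hc; rewrite /cond => /andP [/andP [Mj iS] yM].
set i := x %/ (M + M) in iS yM *; set j := x %% (M + M) in Mj yM *.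
rewrite /fc yM.
have il := idx_lt iS.
rewrite modnMDl modn_small // divnMDl // divn_small // addn0 sl_idx //.
have jE : j < M + M by rewrite ltn_mod.
by rewrite [in RHS](divn_eq x (M + M)) -/i -/j; lia.
Qed.

Lemma fc_lt x : 0 < D -> x < D * (M + M) -> fc x < D * (M + M).
Proof.
move=> D0 xN; rewrite /fc; case: ifP => xM.
  have lK : x %% K < K by rewrite ltn_mod.
  have bM : x %/ K < M by apply: leq_ltn_trans (leq_div _ _) xM.
  have := sl_lt lK; nia.
case: ifP => // /andP [_ yM]; nia.
Qed.

Lemma count_one m : m < K ->
  \sum_(b < M) (b * K + m < M) = M %/ K + (m < M %% K).
Proof.
move=> mK; have HM := divn_eq M K; have Hr : M %% K < K by rewrite ltn_mod.
move: (M %/ K) (M %% K) HM Hr => q r HM Hr.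
rewrite -(big_mkord xpredT (fun b => (b * K + m < M : nat))).
have [qM|] := ltnP q M; last first.
  move=> Mq; have r0 : r = 0 by nia.
  have Mq' : q = M by nia.
  rewrite r0 /= addn0 (eq_big_nat _ _ (F2 := fun _ => 1)); last first.
    by move=> b /andP [_ bM]; apply/eqP; rewrite eqb1; nia.
  by rewrite sum_nat_const_nat; lia.
rewrite (big_cat_nat _ (n := q)) //=; last by lia.
rewrite [X in _ + X](big_cat_nat _ (n := q.+1)) //= big_nat1.
rewrite (eq_big_nat _ _ (F1 := fun b => (b * K + m < M : nat)) (F2 := fun _ => 1)); last first.
  by move=> b /andP [_ bM]; apply/eqP; rewrite eqb1; nia.
rewrite [X in _ + (_ + X)](eq_big_nat _ _ (F2 := fun _ => 0)); last first.
  by move=> b /andP [bq bM]; apply/eqP; rewrite eqb0 -leqNgt; nia.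
rewrite !sum_nat_const_nat muln0 addn0 muln1 subn0; congr (_ + _).
by congr nat_of_bool; apply/idP/idP; nia.
Qed.

Lemma count_cond i i' : i \in sn -> i' \in sn ->
  \sum_(j < M + M) (cond i j && cond i' j) =
    M %/ K + ((idx i < M %% K) && (idx i' < M %% K)).
Proof.
move=> iS i'S; rewrite big_split_ord /= big1 ?add0n; last first.
  by move=> j _; rewrite /cond /= leqNgt ltn_ord.
have -> : (idx i < M %% K) && (idx i' < M %% K) = (maxn (idx i) (idx i') < M %% K).
  by rewrite gtn_max.
rewrite -count_one; last by rewrite gtn_max !idx_lt.
apply: eq_bigr => b _; rewrite /cond /= leq_addr iS i'S addKn /=.
by congr nat_of_bool; apply/idP/idP; [case/andP; lia | lia].
Qed.

End Comb.

Section Basics.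
Variable R : realType.
Local Notation C := R[i].

Lemma adjE m n (A : 'M[C]_(m, n)) i j : adj A i j = (A j i)^*.
Proof. by rewrite /adj !mxE. Qed.

Lemma adj_mul m n p (A : 'M[C]_(m, n)) (B : 'M[C]_(n, p)) :
  adj (A *m B) = adj B *m adj A.
Proof. by rewrite /adj map_mxM trmx_mul. Qed.

Lemma adjK m n (A : 'M[C]_(m, n)) : adj (adj A) = A.
Proof. by apply/matrixP => i j; rewrite !adjE conjCK. Qed.

Lemma adj1 n : adj (1%:M : 'M[C]_n) = 1%:M.
Proof. by apply/matrixP => i j; rewrite adjE !mxE conjC_nat eq_sym. Qed.

Lemma ketbraE d (v : 'cV[C]_d) i j : ketbra v i j = v i 0 * (v j 0)^*.
Proof. by rewrite /ketbra !mxE big_ord1 adjE. Qed.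

Lemma unitary1 n : unitary (1%:M : 'M[C]_n).
Proof. by rewrite /unitary adj1 mul1mx. Qed.

Lemma expi_norm (t : R) : expi t * (expi t)^* = 1.
Proof.
rewrite /expi /=.
apply/eqP; rewrite eq_complex /=; apply/andP; split; apply/eqP.
- by rewrite mulrN opprK -!expr2 cos2Dsin2.
- by rewrite mulrN mulrC addNr.
Qed.

End Basics.

Section PartB.
Variable R : realType.
Local Notation C := R[i].

Lemma conjR (x : R) : (x%:C%C : C)^* = x%:C%C.
Proof. exact: conjc_real. Qed.

Lemma sqrt_inv_sq (k : nat) : (0 < k)%N ->
  ((Num.sqrt (k%:R : R))^-1)%:C%C * (((Num.sqrt (k%:R : R))^-1)%:C%C : C)^* = (k%:R : C)^-1.
Proof.
move=> k0; rewrite conjR -rmorphM /= -invfM -expr2 sqr_sqrtr ?ler0n //.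
by rewrite fmorphV /= rmorph_nat.
Qed.

Lemma unif_sq d k (psi : 'cV[C]_d) : unif_coh k psi ->
  exists J : {set 'I_d}, #|J| = k /\
    forall j, psi j 0 * (psi j 0)^* = if j \in J then (k%:R : C)^-1 else 0.
Proof.
case=> k0 [J [th [cJ Hp]]]; exists J; split => // j.
rewrite Hp; case: (j \in J); last by rewrite mul0r.
by rewrite rmorphM /= mulrACA expi_norm mulr1 sqrt_inv_sq.
Qed.

Lemma sq_eq0 (x : C) : (x * x^* == 0) = (x == 0).
Proof. exact: mul_conjC_eq0. Qed.

Lemma unif_supp d k (psi : 'cV[C]_d) (J : {set 'I_d}) :
  (0 < k)%N ->
  (forall j, psi j 0 * (psi j 0)^* = if j \in J then (k%:R : C)^-1 else 0) ->
  forall j, (psi j 0 != 0) = (j \in J).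
Proof.
move=> k0 H j; rewrite -sq_eq0 H; case: (j \in J) => //=; last by rewrite eqxx.
by rewrite invr_eq0 pnatr_eq0 -lt0n k0.
Qed.

Lemma key_form d (w : 'rV[C]_d) (v : 'cV[C]_d) :
  (w *m ketbra v *m adj w) 0 0 = (w *m v) 0 0 * ((w *m v) 0 0)^*.
Proof.
by rewrite /ketbra !mulmxA -mulmxA -adj_mul mxE big_ord1 adjE.
Qed.

Lemma orth d L (p : 'I_L -> R) (phi : 'I_L -> 'cV[C]_d) (psi : 'cV[C]_d)
  (w : 'rV[C]_d) :
  (forall a, 0 <= p a) ->
  ketbra psi = \sum_a (p a)%:C%C *: ketbra (phi a) ->
  (w *m psi) 0 0 = 0 -> forall a, p a != 0 -> (w *m phi a) 0 0 = 0.
Proof.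
move=> p0 Hr H0 a pa.
have := key_form w psi; rewrite H0 mul0r Hr mulmx_sumr mulmx_suml summxE.
under eq_bigr => b _ do rewrite -scalemxAr -scalemxAl mxE key_form.
move=> E; have H : forall b, (p b)%:C%C * ((w *m phi b) 0 0 * ((w *m phi b) 0 0)^*) = 0.
  move=> b; apply: (psumr_eq0P _ E) => // c _.
  apply: mulr_ge0; [by rewrite ler0c | exact: mul_conjC_ge0].
have /eqP := H a.
rewrite mulf_eq0 sq_eq0 => /orP[|/eqP //].
by move/eqP => /(congr1 (fun z : C => complex.Re z)) /= pa0; move: pa; rewrite pa0 eqxx.
Qed.

Lemma delta_mulE d (M : 'cV[C]_d) (j : 'I_d) : (delta_mx (0 : 'I_1) j *m M) 0 0 = M j 0.
Proof. by rewrite -rowE mxE. Qed.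

Lemma same_k d k L (p : 'I_L -> R) (ks : 'I_L -> nat) (phi : 'I_L -> 'cV[C]_d)
  (psi : 'cV[C]_d) :
  unif_coh k psi -> (forall a, 0 <= p a) ->
  (forall a, unif_coh (ks a) (phi a)) ->
  ketbra psi = \sum_a (p a)%:C%C *: ketbra (phi a) ->
  forall a, p a != 0 -> ks a = k.
Proof.
move=> Hpsi p0 Hu Hr a pa.
have k0 : (0 < k)%N by case: Hpsi.
have ka0 : (0 < ks a)%N by case: (Hu a).
have [J [cJ HJ]] := unif_sq Hpsi.
have [Ja [cJa HJa]] := unif_sq (Hu a).
have sJ := unif_supp k0 HJ; have sJa := unif_supp ka0 HJa.
have st1 : forall j, j \notin J -> j \notin Ja.
  move=> j jJ; rewrite -sJa negbK; apply/eqP.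
  have := orth (w := delta_mx (0 : 'I_1) j) p0 Hr; rewrite !delta_mulE => H.
  rewrite -(delta_mulE (phi a)); apply: H => //.
  by apply/eqP; rewrite -[_ == 0]negbK sJ.
have eJ : J = Ja.
  apply/setP => j; apply/idP/idP; last first.
    by apply: contraLR; apply: st1.
  move=> jJ; have : (0 < #|Ja|)%N by rewrite cJa.
  rewrite card_gt0 => /set0Pn [j' j'Ja].
  have j'J : j' \in J by apply: contraLR j'Ja; apply: st1.
  have [-> //|jj'] := eqVneq j j'.
  pose w := psi j' 0 *: delta_mx (0:'I_1) j - psi j 0 *: delta_mx (0:'I_1) j' : 'rV[C]_d.
  have wE : forall M : 'cV[C]_d, (w *m M) 0 0 = psi j' 0 * M j 0 - psi j 0 * M j' 0.
    move=> M; rewrite mulmxBl -!scalemxAl -(delta_mulE M j) -(delta_mulE M j').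
    by move: (_ *m M) (_ *m M) => A B; rewrite !mxE.
  have := orth (w := w) p0 Hr; rewrite wE mulrC subrr => /(_ erefl a pa).
  rewrite wE => /eqP.
  rewrite subr_eq0 => /eqP E; rewrite -sJa.
  apply/negP => /eqP E0; move: E; rewrite E0 mulr0 => /esym/eqP.
  by rewrite mulf_eq0 -!sJ -!sJa in jJ j'Ja *; case/orP => /eqP E1;
    [move: jJ | move: j'Ja]; rewrite E1 eqxx.
by rewrite -cJ -cJa eJ.
Qed.

Lemma CfU d k (psi : 'cV[C]_d) : unif_coh k psi ->
  C_f_U (ketbra psi) = (log2 (k%:R : R))%:E.
Proof.
move=> Hpsi; apply/eqP; rewrite eq_le; apply/andP; split.
  apply: ge_ereal_inf; exists (log2 (k%:R : R))%:E => //.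
  exists 1%N, (fun _ => 1), (fun _ => k), (fun _ => psi).
  split; first by move=> _; exact: ler01.
  split; first by rewrite big_ord1.
  split; first by move=> _.
  split; first by rewrite big_ord1 scale1r.
  by rewrite big_ord1 mul1r.
apply/ereal_infP => y [L [p [ks [phi [p0 [p1 [Hu [Hr ->]]]]]]]].
rewrite lee_fin le_eqVlt; apply/orP; left; apply/eqP.
transitivity (\sum_a p a * log2 (k%:R : R)); first by rewrite -mulr_suml p1 mul1r.
apply: eq_bigr => a _; have [->|pa] := eqVneq (p a) 0; first by rewrite !mul0r.
by rewrite (same_k Hpsi p0 Hu Hr pa).
Qed.

End PartB.

Section TrNorm.
Variable R : realType.
Local Notation C := R[i].

Lemma normc_ge0 (z : C) : 0 <= Normc.normc z.
Proof. by case: z => a b; exact: sqrtr_ge0. Qed.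

Lemma normc_le (z : C) (B : R) : `|z| <= B%:C%C -> Normc.normc z <= B.
Proof. by rewrite -lecR. Qed.

Lemma trnorm_ge0 N (X : 'M[C]_N) : 0 <= trnorm X.
Proof.
rewrite /trnorm; case: (pselect (has_sup [set Normc.normc (\tr (U *m X)) | U in [set U : 'M[C]_N | unitary U]])) => [hs|nhs]; last by rewrite sup_out.
apply: (le_trans (normc_ge0 (\tr (1%:M *m X)))); apply: (sup_upper_bound hs).
by exists 1%:M => //; exact: unitary1.
Qed.

Lemma trnorm_le N (X : 'M[C]_N) (B : R) :
  (forall U, unitary U -> Normc.normc (\tr (U *m X)) <= B) -> trnorm X <= B.
Proof.
move=> H; apply: ge_sup; first by exists (Normc.normc (\tr (1%:M *m X))), 1%:M => //; exact: unitary1.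
by move=> x [U HU <-]; apply: H.
Qed.

Lemma amgm (y z : C) : `|y| * `|z| *+ 2 <= `|y| ^+ 2 + `|z| ^+ 2.
Proof.
have : 0 <= (`|y| - `|z|) * (`|y| - `|z|)^* by exact: mul_conjC_ge0.
rewrite rmorphB /= !conj_normC -expr2 sqrrB.
by rewrite addrAC subr_ge0.
Qed.

Lemma quad_bound N (U : 'M[C]_N) (z : 'cV[C]_N) : unitary U ->
  `|\sum_i \sum_j U i j * (z j 0 * (z i 0)^*)| <= \sum_i z i 0 * (z i 0)^*.
Proof.
move=> HU; pose y := U *m z.
have yE : forall i, \sum_j U i j * (z j 0 * (z i 0)^*) = y i 0 * (z i 0)^*.
  by move=> i; rewrite /y mxE mulr_suml; apply: eq_bigr => j _; rewrite mulrA.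
under eq_bigr => i _ do rewrite yE.
have Uy : \sum_i y i 0 * (y i 0)^* = \sum_i z i 0 * (z i 0)^*.
  have HU' : adj U *m U = 1%:M by apply: mulmx1C.
  have : (adj y *m y) 0 0 = (adj z *m z) 0 0.
    by rewrite /y adj_mul -mulmxA (mulmxA (adj U)) HU' mul1mx.
  by rewrite !mxE; under eq_bigr => i _ do rewrite adjE mulrC; under [RHS]eq_bigr => i _ do rewrite adjE mulrC.
apply: le_trans (ler_norm_sum _ _ _) _.
have H2 : \sum_i `|y i 0 * (z i 0)^*| *+ 2 <= \sum_i (y i 0 * (y i 0)^* + z i 0 * (z i 0)^*).
  apply: ler_sum => i _; rewrite normrM norm_conjC -!normCK; exact: amgm.
have E2 : \sum_i (y i 0 * (y i 0)^* + z i 0 * (z i 0)^*) = (\sum_i z i 0 * (z i 0)^*) *+ 2.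
  by rewrite big_split /= Uy mulr2n.
rewrite E2 sumrMnl in H2.
by move: H2; rewrite lerMn2r.
Qed.

End TrNorm.

Section Tens.
Variable R : realType.
Local Notation C := R[i].

Definition Unif D K (t : 'cV[C]_D) :=
  [/\ (0 < K)%N, forall j, t j 0 * (t j 0)^* = 0 \/ t j 0 * (t j 0)^* = (K%:R)^-1
   & \sum_j t j 0 * (t j 0)^* = 1].

Lemma unif_psi d k (psi : 'cV[C]_d) : unif_coh k psi -> Unif k psi.
Proof.
move=> Hp; have k0 : (0 < k)%N by case: Hp.
have [J [cJ HJ]] := unif_sq Hp; split => //.
  by move=> j; rewrite HJ; case: (j \in J); [right | left].
under eq_bigr => j _ do rewrite HJ.
rewrite -big_mkcond /= sumr_const cJ -[X in X = 1]mulr_natr mulVf //.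
by rewrite pnatr_eq0 -lt0n.
Qed.

Lemma unif_cast D D' K (e : D = D') (t : 'cV[C]_D) :
  Unif K t -> Unif K (castmx (e, erefl 1%N) t).
Proof. by case: D' / e; rewrite castmx_id. Qed.

Definition tv D d (t : 'cV[C]_D) (psi : 'cV[C]_d) : 'cV[C]_(D * d) :=
  \col_x (t (mxtens_unindex x).1 0 * psi (mxtens_unindex x).2 0).

Lemma unif_tens D d K k (t : 'cV[C]_D) (psi : 'cV[C]_d) :
  Unif K t -> Unif k psi -> Unif (K * k) (tv t psi).
Proof.
case=> K0 Ht St [k0 Hp Sp]; split.
- by rewrite muln_gt0 K0 k0.
- move=> x; rewrite !mxE rmorphM /= mulrACA.
  case: (Ht (mxtens_unindex x).1) => ->; first by left; rewrite mul0r.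
  case: (Hp (mxtens_unindex x).2) => ->; first by left; rewrite mulr0.
  by right; rewrite natrM invfM.
- rewrite -[1]mulr1 -{1}St -Sp mulr_sum; apply: eq_bigr => x _.
  by rewrite !mxE rmorphM /= mulrACA.
Qed.

Lemma ketbra_tens m D d (e : (D * d)%N = m) (t : 'cV[C]_D) (psi : 'cV[C]_d) :
  castmx (e, e) (tensmx (ketbra t) (ketbra psi)) = ketbra (castmx (e, erefl 1%N) (tv t psi)).
Proof.
case: m / e; rewrite !castmx_id; apply/matrixP => x y.
by rewrite ketbraE !mxE !big_ord1 !adjE rmorphM /= mulrACA.
Qed.

Lemma tpow_unif d k (psi : 'cV[C]_d) : Unif k psi ->
  forall n, exists t : 'cV[C]_(d ^ n), Unif (k ^ n) t /\ tpow (ketbra psi) n = ketbra t.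
Proof.
move=> Hp; elim=> [|n [t [Ht Et]]].
  exists (const_mx 1); split.
    split => //; first by move=> j; right; rewrite mxE conjC1 mulr1 expn0 invr1.
    under eq_bigr => j _ do rewrite mxE conjC1 mulr1.
    by rewrite sumr_const card_ord expn0.
  apply/matrixP => i j; rewrite ketbraE !mxE conjC1 mulr1.
  have -> : i = j.
    apply/val_inj; have Hi : (val i < 1)%N by apply: (leq_trans (ltn_ord i)); rewrite expn0.
    have Hj : (val j < 1)%N by apply: (leq_trans (ltn_ord j)); rewrite expn0.
    by move: Hi Hj; case: (val i) => //; case: (val j).
  by rewrite eqxx.
exists (castmx (esym (expnSr d n), erefl 1%N) (tv t psi)); split.
  by rewrite [(k ^ _)%N]expnSr; apply: unif_cast; apply: unif_tens.
by rewrite /= Et ketbra_tens.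
Qed.

End Tens.


Section Dil.
Variable R : realType.
Local Notation C := R[i].
Variables (D' K M : nat) (t : 'cV[C]_D'.+1).
Hypothesis Ht : Unif K t.
Hypothesis M0 : (0 < M)%N.
Local Notation D := D'.+1.
Let S := [set j : 'I_D | t j 0 != 0].
Let sn := [seq val i | i <- enum S].

Lemma K0 : (0 < K)%N. Proof. by case: Ht. Qed.

Lemma KC0 : (K%:R : C) != 0. Proof. by rewrite pnatr_eq0 -lt0n K0. Qed.
Lemma MC0 : (M%:R : C) != 0. Proof. by rewrite pnatr_eq0 -lt0n M0. Qed.

Lemma tS j : t j 0 * (t j 0)^* = if j \in S then (K%:R)^-1 else 0.
Proof.
rewrite inE; case: Ht => _ H _; case: (H j) => E.
  by move/eqP: (E); rewrite sq_eq0 => /eqP ->; rewrite eqxx mul0r.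
by rewrite E -sq_eq0 E invr_eq0 KC0.
Qed.

Lemma cS : #|S| = K.
Proof.
case: Ht => _ _ Hs.
have : (#|S|%:R : C) * (K%:R)^-1 = 1.
  rewrite -[X in _ = X]Hs; under [RHS]eq_bigr => j _ do rewrite tS.
  by rewrite -big_mkcond /= sumr_const mulr_natl.
move/(congr1 (fun x => x * K%:R)); rewrite mul1r mulfVK ?KC0 //.
by move/eqP; rewrite eqr_nat => /eqP.
Qed.

Lemma sn_uniq : uniq sn.
Proof. by rewrite map_inj_uniq ?enum_uniq //; exact: val_inj. Qed.

Lemma sn_size : size sn = K.
Proof. by rewrite size_map -cardE cS. Qed.

Lemma sn_all : all (fun i => (i < D)%N) sn.
Proof. by apply/allP => x /mapP [i _ ->]; exact: ltn_ord. Qed.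

Lemma memsn (i : 'I_D) : (val i \in sn) = (i \in S).
Proof. by rewrite mem_map ?mem_enum //; exact: val_inj. Qed.

Local Notation E := (M + M)%N.
Local Notation N := (D * (M + M))%N.

Definition gf (x : 'I_N) : 'I_N := insubd x (fc sn K M x).

Lemma gf_val x : val (gf x) = fc sn K M x.
Proof.
by rewrite val_insubd (fc_lt sn_uniq sn_size sn_all K0 M0) ?ltn_ord.
Qed.

Lemma gfK : cancel gf gf.
Proof.
by move=> x; apply: val_inj; rewrite !gf_val (fcK sn_uniq sn_size sn_all K0 M0).
Qed.

Definition sg : {perm 'I_N} := perm (can_inj gfK).

Lemma sgE x : val (sg x) = fc sn K M x.
Proof. by rewrite permE gf_val. Qed.

Definition sK : C := (Num.sqrt (K%:R : R))%:C%C.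
Definition cM : C := ((Num.sqrt (M%:R : R))^-1)%:C%C.

Lemma sK2 : sK * sK^* = K%:R.
Proof.
rewrite /sK conjR -rmorphM /= -expr2 sqr_sqrtr ?ler0n //.
by rewrite rmorph_nat.
Qed.

Lemma cM2 : cM * cM^* = (M%:R)^-1.
Proof. by rewrite /cM sqrt_inv_sq. Qed.

Definition vv : 'rV[C]_N :=
  \row_x (if (val x < M)%N then sK * t (inord (sl sn (val x %% K))) 0 else 1).

Lemma inord_sl l : (l < K)%N -> inord (sl sn l) \in S /\ val (inord (sl sn l) : 'I_D) = sl sn l.
Proof.
move=> lK; have lt := sl_lt sn_size sn_all lK.
have vi : val (inord (sl sn l) : 'I_D) = sl sn l by rewrite /= inordK.
by split => //; rewrite -memsn vi (sl_in sn_size lK).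
Qed.

Lemma vv_norm x : vv 0 x * (vv 0 x)^* = 1.
Proof.
rewrite mxE; case: ifP => _; last by rewrite conjC1 mulr1.
have [inS _] := inord_sl (ltn_pmod (val x) K0).
by rewrite rmorphM mulrACA sK2 tS inS mulfV ?KC0.
Qed.

Definition UU : 'M[C]_N := perm_mx sg *m diag_mx vv.

Lemma UU_inc : incoh_unitary UU.
Proof. by exists sg, vv; split => //; exact: vv_norm. Qed.

Lemma inc_projT n : inc_proj R [set: 'I_n] = 1%:M.
Proof.
rewrite /inc_proj -diag_const_mx; congr diag_mx.
by apply/matrixP => i j; rewrite !mxE inE.
Qed.

Definition Phi (X : 'M[C]_N) : 'M[C]_N :=
  \sum_(a < 1) \sum_(b < 1) (1 : R)%:C%C *:
     (UU *m inc_proj R [set: 'I_N] *m X *m inc_proj R [set: 'I_N] *m adj UU).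

Definition Lam (X : 'M[C]_M) : 'M[C]_D := ptrace (Phi (embed N X)).

Lemma Lam_PIO : PIO Lam.
Proof.
exists E, Phi; split; first by nia.
split => //.
exists 1%N, 1%N, (fun _ => 1), (fun _ _ => UU), (fun _ _ => [set: 'I_N]).
split; first by move=> _; exact: ler01.
split; first by rewrite big_ord1.
split; first by move=> _ _; exact: UU_inc.
by split => // a; rewrite big_ord1 inc_projT.
Qed.

Definition ev : 'cV[C]_N := \col_x (if (val x < M)%N then cM else 0).

Lemma embed_ev : embed N (ketbra (max_coh R M)) = ketbra ev.
Proof.
apply/matrixP => x y; rewrite ketbraE !mxE.
case: (@insubP _ (fun k => (k < M)%N) 'I_M (val x)) => [i' xM vi|/negbTE xM];
case: (@insubP _ (fun k => (k < M)%N) 'I_M (val y)) => [j' yM vj|/negbTE yM];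
  rewrite ?xM ?yM ?mul0r ?conjC0 ?mulr0 //.
by rewrite ketbraE !mxE.
Qed.

Lemma Phi_ketbra (z : 'cV[C]_N) : Phi (ketbra z) = ketbra (UU *m z).
Proof.
rewrite /Phi !big_ord1 inc_projT !mulmx1.
have -> : ((1:R)%:C%C : C) = 1 by [].
by rewrite scale1r /ketbra adj_mul !mulmxA.
Qed.

Lemma wE x : (UU *m ev) x 0 = vv 0 (sg x) * ev (sg x) 0.
Proof. by rewrite /UU -mulmxA -row_permE mxE mul_diag_mx mxE. Qed.

Lemma wT (i : 'I_D) (j : 'I_E) :
  (UU *m ev) (mxtens_index (i, j)) 0 = if cond sn K M i j then sK * cM * t i 0 else 0.
Proof.
rewrite wE !mxE sgE /=.
have jE := ltn_ord j.
case: (ltnP (i * E + j) M) => xM.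
  have jM : (j < M)%N by nia.
  have -> : cond sn K M i j = false by rewrite /cond leqNgt jM.
  by rewrite ltnNge fc_small //= mulr0.
rewrite (fc_big sn_uniq sn_size sn_all K0 M0) //.
case Hc: (cond _ _ _ _ _); last by rewrite ltnNge xM /= mulr0.
move: (Hc); rewrite /cond => /andP [/andP [Mj iS] yM].
rewrite yM /=.
have il := idx_lt sn_size iS.
rewrite modnMDl modn_small // sl_idx //.
have -> : (inord (val i) : 'I_D) = i by rewrite inord_val.
by rewrite mulrAC.
Qed.

Lemma tnS (i : 'I_D) : i \notin S -> t i 0 = 0.
Proof. by rewrite inE negbK => /eqP. Qed.

Lemma LamE (i i' : 'I_D) : Lam (ketbra (max_coh R M)) i i' =
  (K%:R / M%:R) * (t i 0 * (t i' 0)^*) *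
  ((M %/ K) + ((idx sn i < M %% K) && (idx sn i' < M %% K)))%N%:R.
Proof.
rewrite /Lam embed_ev Phi_ketbra /ptrace mxE.
under eq_bigr => j _ do rewrite ketbraE !wT.
have tE : forall b1 b2 (A B : C), (if b1 then A else 0) * (if b2 then B else 0)^* = (b1 && b2)%:R * (A * B^*).
  by move=> [] [] A B; rewrite ?conjC0 ?mul0r ?mulr0 ?mul1r.
under eq_bigr => j _ do rewrite tE.
rewrite -mulr_suml -natr_sum.
have -> : sK * cM * t i 0 * (sK * cM * t i' 0)^* = (K%:R / M%:R) * (t i 0 * (t i' 0)^*).
  by rewrite !rmorphM /= mulrACA (mulrACA sK) sK2 cM2.
have [iS|/tnS ->] := boolP (i \in S); last by rewrite !(mul0r, mulr0).
have [i'S|/tnS ->] := boolP (i' \in S); last by rewrite !(conjC0, mul0r, mulr0).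
by rewrite (count_cond sn_uniq sn_size sn_all K0 M0) ?memsn // mulrC.
Qed.

Lemma subE n (A B : 'M[C]_n) i j : (A - B) i j = A i j - B i j.
Proof. by rewrite !mxE. Qed.

Lemma trE n (A B : 'M[C]_n) : \tr (A *m B) = \sum_i \sum_j A i j * B j i.
Proof. by rewrite /mxtrace; apply: eq_bigr => i _; rewrite mxE. Qed.

Lemma err_bound : trnorm (Lam (ketbra (max_coh R M)) - ketbra t) <= (2 * K%:R / M%:R : R).
Proof.
apply: trnorm_le => U' HU'; apply: normc_le.
set q := (M %/ K)%N; set r := (M %% K)%N.
pose bb (j : 'I_D) : C := ((idx sn j < r)%N)%:R.
pose u : 'cV[C]_D := \col_j (bb j * t j 0).
have hm : (M%:R : C) = q%:R * K%:R + r%:R by rewrite -natrM -natrD -divn_eq.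
have Xe : forall j i, (Lam (ketbra (max_coh R M)) - ketbra t) j i =
    -(r%:R / M%:R) * (t j 0 * (t i 0)^*) + (K%:R / M%:R) * (u j 0 * (u i 0)^*).
  move=> j i; rewrite subE LamE ketbraE !mxE.
  rewrite -/q -/r natrD -mulnb natrM rmorphM /= conjC_nat.
  rewrite -/(bb j) -/(bb i).
  move: (t j 0) ((t i 0)^*) (bb j) (bb i) => a b c d.
  rewrite hm; field.
  by rewrite -hm MC0.
rewrite trE.
under eq_bigr => i _ do under eq_bigr => j _ do rewrite Xe mulrDr mulrCA [X in _ + X]mulrCA.
under eq_bigr => i _ do rewrite big_split /= -!mulr_sumr.
rewrite big_split /= -!mulr_sumr.
have t1 : \sum_i t i 0 * (t i 0)^* = 1 by case: Ht.
have u1 : \sum_i u i 0 * (u i 0)^* <= 1.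
  rewrite -t1; apply: ler_sum => i _; rewrite mxE rmorphM /= mulrACA /bb conjC_nat.
  case: (_ < _)%N; rewrite ?mul1r ?mul0r //; exact: mul_conjC_ge0.
have Qt := quad_bound t HU'; have Qu := quad_bound u HU'.
rewrite t1 in Qt.
have rM : 0 <= (r%:R / M%:R : C) by rewrite divr_ge0 ?ler0n.
have KM : 0 <= (K%:R / M%:R : C) by rewrite divr_ge0 ?ler0n.
apply: (le_trans (ler_normD _ _)).
rewrite (normrM (- (r%:R / M%:R))) (normrM (K%:R / M%:R)) normrN (ger0_norm rM) (ger0_norm KM).
apply: (le_trans (lerD (ler_wpM2l rM Qt) (ler_wpM2l KM (le_trans Qu u1)))).
have -> : ((2 * K%:R / M%:R : R)%:C%C : C) = (K + K)%:R / M%:R.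
  by rewrite !rmorphM /= fmorphV /= !rmorph_nat natrD -mulr2n mulr_natl.
rewrite !mulr1 -mulrDl ler_pM2r ?invr_gt0 ?ltr0n // -natrD ler_nat leq_add2r.
by rewrite ltnW // ltn_mod K0.
Qed.

End Dil.


Section Final.
Variable R : realType.
Local Notation C := R[i].
Local Open Scope classical_set_scope.

Lemma dilution D K M (t : 'cV[C]_D) : Unif K t -> (0 < M)%N ->
  exists Lam : 'M[C]_M -> 'M[C]_D, PIO Lam /\
    trnorm (Lam (ketbra (max_coh R M)) - ketbra t) <= 2 * K%:R / M%:R.
Proof.
case: D t => [|D'] t Ht M0.
  by case: Ht => _ _; rewrite big_ord0 => /eqP; rewrite eq_sym oner_eq0.
by eexists; split; [exact: (Lam_PIO Ht M0) | exact: (err_bound Ht M0)].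
Qed.

Lemma dil_bound d (rho : 'M[C]_d) (r : R) n K (t : 'cV[C]_(d ^ n)) :
  Unif K t -> tpow rho n = ketbra t ->
  0 <= dil_err rho r n <= 2 * K%:R / (2 ^ nbits r n)%N%:R.
Proof.
move=> Ht Et; rewrite /dil_err Et.
have M0 : (0 < 2 ^ nbits r n)%N by rewrite expn_gt0.
have [L0 [PL0 HL0]] := dilution Ht M0.
set S := [set _ | _ in _].
have lb : lbound S 0 by move=> x [Lam _ <-]; exact: trnorm_ge0.
have ne : S !=set0 by exists (trnorm (L0 (ketbra (max_coh R (2 ^ nbits r n))) - ketbra t)), L0.
apply/andP; split; first exact: lb_le_inf.
apply: le_trans HL0; apply: (ge_inf (ex_intro _ 0 lb)).
by exists L0.
Qed.

Lemma rate_bound (k : nat) (r : R) n : (0 < k)%N -> 0 <= r ->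
  2 * (k ^ n)%N%:R / (2 ^ nbits r n)%N%:R <= 4 * (expR (ln (k%:R : R) - r * ln 2)) ^+ n.
Proof.
move=> k0 r0; set L := ln (2 : R); set lk := ln (k%:R : R).
have L0 : 0 < L by apply: ln_gt0; rewrite ltr1n.
have kE : (k%:R : R) = expR lk by rewrite /lk lnK // posrE ltr0n.
have tE : (2 : R) = expR L by rewrite /L lnK // posrE ltr0n.
have nb : r * n%:R - 1 <= (nbits r n)%:R.
  rewrite /nbits natr_absz ger0_norm ?floor_ge0 ?mulr_ge0 //.
  have := floorD1_gt (r * n%:R); rewrite intrD lerBlDr => /ltW //.
rewrite !natrX kE [in X in _ / X]tE -!expRM_natr -mulrA -expRB.
rewrite [X in _ <= X * _](_ : 4 = 2 * expR L); last by rewrite -tE -natrM.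
rewrite -mulrA ler_pM2l ?ltr0n // -expRD ler_expR.
have := ler_wpM2l (ltW L0) nb.
set a := (nbits r n)%:R; set m := n%:R => h.
have -> : lk * m - L * a = lk * m - L * a by [].
rewrite mulrBl; move: h; rewrite mulrBr mulr1 => h.
have -> : L + (lk * m - r * L * m) = lk * m - (L * (r * m) - L) by ring.
by rewrite lerD2l lerN2.
Qed.

End Final.

Unset Implicit Arguments.

Theorem lemma14 (R : realType) (d k : nat) (psi : 'cV[R[i]]_d) :
  unif_coh k psi ->
  (C_c_PIO (ketbra psi) <= (log2 (k%:R : R))%:E)%E /\
  C_f_U (ketbra psi) = (log2 (k%:R : R))%:E.
Proof.
move=> Hpsi; split; last exact: CfU.
have k0 : (0 < k)%N by case: Hpsi.
have Hu := unif_psi Hpsi.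
have L0 : 0 < ln (2 : R) by apply: ln_gt0; rewrite ltr1n.
have lk0 : 0 <= log2 (k%:R : R).
  by rewrite /log2 divr_ge0 ?ln_ge0 ?ler1n // ltW.
apply/lee_addgt0Pr => e e0.
apply: ge_ereal_inf; exists (log2 (k%:R : R) + e)%:E => //.
exists (log2 (k%:R : R) + e) => //; split; first by rewrite addr_ge0 // ltW.
set r := log2 _ + e.
have r0 : 0 <= r by rewrite addr_ge0 // ltW.
set z := expR (ln (k%:R : R) - r * ln 2).
have z1 : `|z| < 1.
  rewrite ger0_norm ?expR_ge0 // expR_lt1 subr_lt0 /r mulrDl /log2 mulfVK ?gt_eqF //.
  by rewrite ltrDl mulr_gt0.
apply: (@squeeze_cvgr _ _ _ _ (fun n => 0 * z ^+ n) (fun n => 4 * z ^+ n)).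
- apply: nearW => n.
  have [t [Ht Et]] := tpow_unif Hu n.
  have /andP [h1 h2] := dil_bound r Ht Et.
  by rewrite mul0r h1 /=; apply: le_trans h2 (rate_bound _ k0 r0).
- exact: (cvg_geometric 0 z1).
- exact: (cvg_geometric 4 z1).
Qed.
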